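(* Let $(G,P,g)$ be the manifold in the context. Then the Weyl tensor of the Levi-Civita connection of $g$ vanishes, i.e. $(G,g)$ is conformally flat.
   Context: $G$ is a 4-dimensional real connected Lie group with Lie algebra having a basis $\{X_1,\dots,X_4\}$ of left-invariant vector fields satisfying, for real numbers $\lambda_1,\dots,\lambda_4$: $[X_1,X_2]=-[X_3,X_4]=\lambda_1X_1+\lambda_2X_2+\lambda_3X_3+\lambda_4X_4$, $[X_1,X_3]=[X_2,X_4]=\lambda_4X_1-\lambda_3X_2+\lambda_2X_3-\lambda_1X_4$, $[X_2,X_3]=[X_1,X_4]=0$. $P$ is the left-invariant tensor with $PX_1=X_3$, $PX_2=X_4$, $PX_3=X_1$, $PX_4=X_2$, and $g$ the left-invariant metric making $\{X_i\}$ orthonormal. *)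

(* Defs.v *)
From Stdlib Require Import Reals.
Open Scope R_scope.

Inductive idx : Set := i1 | i2 | i3 | i4.

(* Left-invariant vector fields are identified with their (constant)
   coefficient vectors in the frame {X_1,...,X_4}: v = sum_k v k X_k. *)
Definition vec := idx -> R.

Definition sum4 (f : idx -> R) : R := f i1 + f i2 + f i3 + f i4.

Definition basis (i : idx) : vec :=
  fun k => match i, k with
           | i1, i1 | i2, i2 | i3, i3 | i4, i4 => 1
           | _, _ => 0 end.

Definition vadd (u v : vec) : vec := fun k => u k + v k.
Definition vscale (a : R) (v : vec) : vec := fun k => a * v k.
Definition vsub (u v : vec) : vec := fun k => u k - v k.

Definition vA (l1 l2 l3 l4 : R) : vec :=
  fun k => match k with i1 => l1 | i2 => l2 | i3 => l3 | i4 => l4 end.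
Definition vB (l1 l2 l3 l4 : R) : vec :=
  fun k => match k with i1 => l4 | i2 => - l3 | i3 => l2 | i4 => - l1 end.
Definition vzero : vec := fun _ => 0.
Definition vneg (v : vec) : vec := fun k => - v k.

Definition brk (l1 l2 l3 l4 : R) (i j : idx) : vec :=
  let A := vA l1 l2 l3 l4 in
  let B := vB l1 l2 l3 l4 in
  match i, j with
  | i1, i2 => A | i2, i1 => vneg A
  | i3, i4 => vneg A | i4, i3 => A
  | i1, i3 => B | i3, i1 => vneg B
  | i2, i4 => B | i4, i2 => vneg B
  | _, _ => vzero
  end.

Definition bracket (l1 l2 l3 l4 : R) (u v : vec) : vec :=
  fun k => sum4 (fun i => sum4 (fun j => u i * v j * brk l1 l2 l3 l4 i j k)).

(* The left-invariant metric g making {X_i} orthonormal. *)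
Definition g (u v : vec) : R := sum4 (fun k => u k * v k).

(* Levi-Civita connection of g on left-invariant fields, via the Koszul formula
   g(nabla_X Y, Z) = 1/2 (g([X,Y],Z) - g([Y,Z],X) + g([Z,X],Y)),
   expanded in the orthonormal frame: nabla_X Y = sum_k g(nabla_X Y, X_k) X_k. *)
Definition nabla (l1 l2 l3 l4 : R) (x y : vec) : vec :=
  fun k => / 2 * ( g (bracket l1 l2 l3 l4 x y) (basis k)
                 - g (bracket l1 l2 l3 l4 y (basis k)) x
                 + g (bracket l1 l2 l3 l4 (basis k) x) y ).

Definition curv (l1 l2 l3 l4 : R) (x y z : vec) : vec :=
  let nb := nabla l1 l2 l3 l4 in
  vsub (vsub (nb x (nb y z)) (nb y (nb x z))) (nb (bracket l1 l2 l3 l4 x y) z).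

Definition Rm (l1 l2 l3 l4 : R) (x y z w : vec) : R := g (curv l1 l2 l3 l4 x y z) w.

Definition Ric (l1 l2 l3 l4 : R) (y z : vec) : R :=
  sum4 (fun k => Rm l1 l2 l3 l4 (basis k) y z (basis k)).

Definition scal (l1 l2 l3 l4 : R) : R :=
  sum4 (fun i => Ric l1 l2 l3 l4 (basis i) (basis i)).

(* Weyl tensor in dimension n = 4:
   W = Rm - 1/(n-2) (Ric Kulkarni-Nomizu g) + s/(2(n-1)(n-2)) (g KN g), i.e.
   W(X,Y,Z,V) = R(X,Y,Z,V)
     - 1/2 ( Ric(Y,Z)g(X,V) - Ric(X,Z)g(Y,V) + Ric(X,V)g(Y,Z) - Ric(Y,V)g(X,Z) )
     + s/6 ( g(Y,Z)g(X,V) - g(X,Z)g(Y,V) ). *)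
Definition Weyl (l1 l2 l3 l4 : R) (x y z v : vec) : R :=
  let Rc := Ric l1 l2 l3 l4 in
  Rm l1 l2 l3 l4 x y z v
  - / 2 * ( Rc y z * g x v - Rc x z * g y v + Rc x v * g y z - Rc y v * g x z )
  + scal l1 l2 l3 l4 / 6 * ( g y z * g x v - g x z * g y v ).

(* Main.v *)
Require Import Defs.
From Stdlib Require Import Reals FunctionalExtensionality.
Open Scope R_scope.
Definition Gm l1 l2 l3 l4 (i j k : idx) : R :=
  /2 * (brk l1 l2 l3 l4 i j k - brk l1 l2 l3 l4 j k i + brk l1 l2 l3 l4 k i j).
Definition Rt (G B : idx -> idx -> idx -> R) (a b c d : idx) : R :=
  sum4 (fun m => G b c m * G a m d - G a c m * G b m d - B a b m * G m c d).
Definition dl (i j : idx) : R := basis i j.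
Definition Rc G B b c := sum4 (fun k => Rt G B k b c k).
Definition Sc G B := sum4 (fun i => Rc G B i i).
Definition Wt G B a b c d := Rt G B a b c d
  - / 2 * (Rc G B b c * dl a d - Rc G B a c * dl b d + Rc G B a d * dl b c - Rc G B b d * dl a c)
  + Sc G B / 6 * (dl b c * dl a d - dl a c * dl b d).
Definition mv l1 l2 l3 l4 (i : idx) : R := match i with i1 => l3 | i2 => l4 | i3 => - l1 | i4 => - l2 end.
Lemma Rc_val l1 l2 l3 l4 b c : Rc (Gm l1 l2 l3 l4) (brk l1 l2 l3 l4) b c =
  -2 * (l1^2+l2^2+l3^2+l4^2) * dl b c + 2 * mv l1 l2 l3 l4 b * mv l1 l2 l3 l4 c.
Proof. (destruct b, c; unfold Rc, Rt, Gm, sum4, brk, vA, vB, vneg, vzero, dl, basis, mv; simpl; field). Qed.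
Lemma Sc_val l1 l2 l3 l4 : Sc (Gm l1 l2 l3 l4) (brk l1 l2 l3 l4) = -6 * (l1^2+l2^2+l3^2+l4^2).
Proof. unfold Sc, sum4; rewrite !Rc_val; unfold dl, basis, mv; simpl; field. Qed.
Lemma Wt0 l1 l2 l3 l4 a b c d : Wt (Gm l1 l2 l3 l4) (brk l1 l2 l3 l4) a b c d = 0.
Proof.
  unfold Wt; rewrite Sc_val, !Rc_val.
  (destruct a, b, c, d; unfold Rt, Gm, sum4, brk, vA, vB, vneg, vzero, dl, basis, mv; simpl; field).
Qed.
Lemma nabla_lin l1 l2 l3 l4 x y k : nabla l1 l2 l3 l4 x y k =
  sum4 (fun i => sum4 (fun j => x i * y j * Gm l1 l2 l3 l4 i j k)).
Proof.
  unfold nabla, g, Gm, bracket.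
  generalize (brk l1 l2 l3 l4) as b; intro b. unfold sum4, basis.
  destruct k; ring.
Qed.
Definition nestT (x y z w : vec) (T : idx -> idx -> idx -> idx -> R) : R :=
  sum4 (fun a => x a * sum4 (fun b => y b * sum4 (fun c => z c * sum4 (fun d => w d * T a b c d)))).

Lemma s4_lin (u f g0 : idx -> R) al :
  sum4 (fun a => u a * (al * f a + g0 a)) = al * sum4 (fun a => u a * f a) + sum4 (fun a => u a * g0 a).
Proof. unfold sum4. ring. Qed.

Lemma nestT_lin x y z w al (T1 T2 : idx -> idx -> idx -> idx -> R) :
  nestT x y z w (fun a b c d => al * T1 a b c d + T2 a b c d) =
  al * nestT x y z w T1 + nestT x y z w T2.
Proof.
  unfold nestT. rewrite <- s4_lin. f_equal; extensionality a; f_equal.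
  rewrite <- s4_lin. f_equal; extensionality b; f_equal.
  rewrite <- s4_lin. f_equal; extensionality c; f_equal.
  rewrite <- s4_lin. reflexivity.
Qed.

Lemma nestT_ext x y z w (T U : idx -> idx -> idx -> idx -> R) :
  (forall a b c d, T a b c d = U a b c d) -> nestT x y z w T = nestT x y z w U.
Proof.
  intro H. f_equal. extensionality a; extensionality b; extensionality c; extensionality d.
  apply H.
Qed.

Lemma nestT_0 x y z w : nestT x y z w (fun _ _ _ _ => 0) = 0.
Proof. unfold nestT, sum4. ring. Qed.

Section S.
Variables (G B : idx -> idx -> idx -> R).
Let N (x y : vec) : vec := fun k => sum4 (fun i => sum4 (fun j => x i * y j * G i j k)).
Let Br (x y : vec) : vec := fun k => sum4 (fun i => sum4 (fun j => x i * y j * B i j k)).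
Lemma P1 x y z w :
  g (N x (N y z)) w = nestT x y z w (fun a b c d => sum4 (fun m => G b c m * G a m d)).
Proof. unfold N, g, nestT, sum4. ring. Qed.
Lemma P2 x y z w :
  g (N y (N x z)) w = nestT x y z w (fun a b c d => sum4 (fun m => G a c m * G b m d)).
Proof. unfold N, g, nestT, sum4. ring. Qed.
Lemma P3 x y z w :
  g (N (Br x y) z) w = nestT x y z w (fun a b c d => sum4 (fun m => B a b m * G m c d)).
Proof. unfold N, Br, g, nestT, sum4. ring. Qed.
Lemma Rm_gen x y z w :
  g (vsub (vsub (N x (N y z)) (N y (N x z))) (N (Br x y) z)) w =
  nestT x y z w (Rt G B).
Proof.
  assert (E : forall u v t, g (vsub (vsub u v) t) w = g u w - g v w - g t w)
    by (intros; unfold g, vsub, sum4; ring).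
  rewrite E, P1, P2, P3.
  transitivity (nestT x y z w (fun a b c d =>
    1 * sum4 (fun m => G b c m * G a m d) +
    ((-1) * sum4 (fun m => G a c m * G b m d) +
    ((-1) * sum4 (fun m => B a b m * G m c d) + 0)))).
  { rewrite !nestT_lin, nestT_0. ring. }
  apply nestT_ext. intros. unfold Rt, sum4. ring.
Qed.
End S.

Lemma Rm_lin l1 l2 l3 l4 x y z w : Rm l1 l2 l3 l4 x y z w =
  nestT x y z w (Rt (Gm l1 l2 l3 l4) (brk l1 l2 l3 l4)).
Proof.
  assert (H : nabla l1 l2 l3 l4 = fun x y k =>
    sum4 (fun i => sum4 (fun j => x i * y j * Gm l1 l2 l3 l4 i j k))).
  { do 3 (apply functional_extensionality; intro). apply nabla_lin. }
  unfold Rm, curv. rewrite H.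
  exact (Rm_gen (Gm l1 l2 l3 l4) (brk l1 l2 l3 l4) x y z w).
Qed.

Lemma collapse k (f : idx -> R) : sum4 (fun a => basis k a * f a) = f k.
Proof. destruct k; unfold sum4, basis; ring. Qed.

Lemma nestT_basis k y z T :
  nestT (basis k) y z (basis k) T = sum4 (fun b => y b * sum4 (fun c => z c * T k b c k)).
Proof.
  unfold nestT. rewrite collapse. f_equal; extensionality b; f_equal.
  f_equal; extensionality c; f_equal. apply collapse.
Qed.

Lemma swap_sum (y z : vec) (F : idx -> idx -> idx -> R) :
  sum4 (fun k => sum4 (fun b => y b * sum4 (fun c => z c * F k b c))) =
  sum4 (fun b => y b * sum4 (fun c => z c * sum4 (fun k => F k b c))).
Proof. unfold sum4. ring. Qed.

Lemma Ric_lin l1 l2 l3 l4 y z : Ric l1 l2 l3 l4 y z =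
  sum4 (fun b => y b * sum4 (fun c => z c * Rc (Gm l1 l2 l3 l4) (brk l1 l2 l3 l4) b c)).
Proof.
  unfold Ric.
  transitivity (sum4 (fun k => sum4 (fun b => y b * sum4 (fun c => z c *
     Rt (Gm l1 l2 l3 l4) (brk l1 l2 l3 l4) k b c k)))).
  { f_equal; extensionality k. rewrite Rm_lin. apply nestT_basis. }
  rewrite swap_sum. reflexivity.
Qed.

Lemma scal_lin l1 l2 l3 l4 : scal l1 l2 l3 l4 = Sc (Gm l1 l2 l3 l4) (brk l1 l2 l3 l4).
Proof.
  unfold scal, Sc. f_equal; extensionality i. rewrite Ric_lin.
  rewrite collapse. apply collapse.
Qed.

Lemma g_lin x v : g x v = sum4 (fun a => x a * sum4 (fun d => v d * dl a d)).
Proof. unfold g, dl, sum4, basis. ring. Qed.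

Lemma mixA x y z v (F H : idx -> idx -> R) :
  sum4 (fun b => y b * sum4 (fun c => z c * F b c)) * sum4 (fun a => x a * sum4 (fun d => v d * H a d))
  = nestT x y z v (fun a b c d => F b c * H a d).
Proof. unfold nestT, sum4. ring. Qed.
Lemma mixB x y z v (F H : idx -> idx -> R) :
  sum4 (fun a => x a * sum4 (fun c => z c * F a c)) * sum4 (fun b => y b * sum4 (fun d => v d * H b d))
  = nestT x y z v (fun a b c d => F a c * H b d).
Proof. unfold nestT, sum4. ring. Qed.
Lemma mixC x y z v (F H : idx -> idx -> R) :
  sum4 (fun a => x a * sum4 (fun d => v d * F a d)) * sum4 (fun b => y b * sum4 (fun c => z c * H b c))
  = nestT x y z v (fun a b c d => F a d * H b c).
Proof. unfold nestT, sum4. ring. Qed.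
Lemma mixD x y z v (F H : idx -> idx -> R) :
  sum4 (fun b => y b * sum4 (fun d => v d * F b d)) * sum4 (fun a => x a * sum4 (fun c => z c * H a c))
  = nestT x y z v (fun a b c d => F b d * H a c).
Proof. unfold nestT, sum4. ring. Qed.

Theorem proposition8p4 (l1 l2 l3 l4 : R) :
  forall x y z v : vec, Weyl l1 l2 l3 l4 x y z v = 0.
Proof.
  intros x y z v.
  unfold Weyl. rewrite scal_lin, Rm_lin, !Ric_lin, !g_lin.
  rewrite mixA, mixB, mixC, mixD, mixA, mixB.
  remember (Gm l1 l2 l3 l4) as G0 eqn:EG. remember (brk l1 l2 l3 l4) as B0 eqn:EB.
  remember (Sc G0 B0) as S eqn:ES.
  transitivity (nestT x y z v (fun a b c d =>
    1 * Rt G0 B0 a b c d +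
    ((- / 2) * (Rc G0 B0 b c * dl a d) +
    ((/ 2) * (Rc G0 B0 a c * dl b d) +
    ((- / 2) * (Rc G0 B0 a d * dl b c) +
    ((/ 2) * (Rc G0 B0 b d * dl a c) +
    ((S / 6) * (dl b c * dl a d) +
    ((- (S / 6)) * (dl a c * dl b d) + 0)))))))).
  { rewrite !nestT_lin, nestT_0. ring. }
  transitivity (nestT x y z v (fun _ _ _ _ => 0)).
  { apply nestT_ext. intros a b c d.
    rewrite <- (Wt0 l1 l2 l3 l4 a b c d) at 2.
    subst. unfold Wt. ring. }
  apply nestT_0.
Qed.
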